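(* Suppose $\partial A$ is a $C^2$ submanifold of $\mathbb R^K$ of dimension $|K|-1$ and the agent is flexible at $p_0$; in particular, $v_A$ is twice differentiable at $p_0$ with positive definite Hessian. Then there exist constants $C_{p_0,A}>0$ and $c_{p_0,A}>0$ such that for every information structure $\mathbf q$, $$C_{p_0,A}\,\mathbb E\|\mathbf q-p_0\|^2\ \ge\ \mathrm{VoI}_A(\mathbf q)\ \ge\ c_{p_0,A}\,\mathbb E\|\mathbf q-p_0\|^2.$$
   Context: Let $K$ be a finite set, signed measures on $K$ identified with $\mathbb R^K$, scalar product $\langle s,v\rangle=\sum_k s_kv_k$, Euclidean norm $\|\cdot\|$. $\Delta\subset\mathbb R^K$ is the simplex of probability distributions on $K$ (differentiability and Hessians of functions on $\Delta$ are taken along $\Delta$, i.e. in directions $s$ with $\sum_k s_k=0$). Fix $p_0\in\Delta$ with full support. $A\subset\mathbb R^K$ is a nonempty compact convex set; $v_A(p)=\max_{a\in A}\langle p,a\rangle$; $A^\star(p)=\arg\max_{a\in A}\langle p,a\rangle$. The agent is flexible at $p_0$ if (equivalently, under the $C^2$ boundary assumption): $p\mapsto A^\star(p)$ is single-valued near $p_0$ and a local diffeomorphism at $p_0$ onto its image in $\partial A$; or $A^\star(p_0)=\{a^\sharp\}$ with all principal curvatures of $\partial A$ at $a^\sharp$ (eigenvalues of the differential of the outer unit normal map) positive; or $v_A$ is twice differentiable at $p_0$ with positive definite Hessian. An information structure is a random variable $\mathbf q$ on $(\Omega,\mathcal F,\mathbb P)$ with values in $\Delta$ and $\mathbb E[\mathbf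 q]=p_0$; $\mathrm{VoI}_A(\mathbf q)=\mathbb E[v_A(\mathbf q)]-v_A(p_0)$. *)

(* Defs.v *)
From Stdlib Require Import Reals List ClassicalEpsilon.
Open Scope R_scope.

Section FiniteDim.
(* The finite set K is a type with a duplicate-free exhaustive enumeration
   enumK (these facts are hypotheses of the main theorem).  Signed measures on
   K are identified with vectors K -> R. *)
Variable K : Type.
Variable enumK : list K.

Definition vec := K -> R.

Definition sumK (f : K -> R) : R := fold_right Rplus 0 (map f enumK).

Definition kdot (s v : vec) : R := sumK (fun k => s k * v k).
Definition knorm (s : vec) : R := sqrt (kdot s s).

Definition vadd (x y : vec) : vec := fun k => x k + y k.
Definition vsub (x y : vec) : vec := fun k => x k - y k.
Definition vscale (t : R) (x : vec) : vec := fun k => t * x k.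

Definition mxv (H : K -> K -> R) (s : vec) : vec := fun k => sumK (fun l => H k l * s l).

Definition in_simplex (p : vec) : Prop := (forall k, 0 <= p k) /\ sumK p = 1.
Definition full_support (p : vec) : Prop := forall k, 0 < p k.

Definition ktangent (s : vec) : Prop := sumK s = 0.

Definition knonempty (A : vec -> Prop) : Prop := exists a, A a.
Definition kconvex (A : vec -> Prop) : Prop :=
  forall a b t, A a -> A b -> 0 <= t <= 1 ->
    A (vadd (vscale t a) (vscale (1 - t) b)).
Definition kbounded (A : vec -> Prop) : Prop :=
  exists M, forall a, A a -> knorm a <= M.
Definition kclosed (A : vec -> Prop) : Prop :=
  forall x, (forall eps, 0 < eps -> exists a, A a /\ knorm (vsub x a) < eps) -> A x.
Definition kcompact (A : vec -> Prop) : Prop := kclosed A /\ kbounded A.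

(* v_A(p) = max_{a in A} <p,a> (well defined for A knonempty kcompact) *)
Definition is_max_value (A : vec -> Prop) (p : vec) (v : R) : Prop :=
  (exists a, A a /\ kdot p a = v) /\ (forall a, A a -> kdot p a <= v).
Definition vA (A : vec -> Prop) (p : vec) : R :=
  epsilon (inhabits 0) (is_max_value A p).

Definition kboundary (A : vec -> Prop) (x : vec) : Prop :=
  forall eps, 0 < eps ->
    (exists a, A a /\ knorm (vsub x a) < eps) /\
    (exists b, ~ A b /\ knorm (vsub x b) < eps).

(* g is C^2 on the open ball B(a,r): Dg is its (Gateaux) gradient, D2g its
   Hessian, given by directional derivatives, with D2g continuous on the ball
   (hence g is C^2 in the Frechet sense). *)
Definition C2_on_ball (a : vec) (r : R) (g : vec -> R) (Dg : vec -> vec)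
    (D2g : vec -> K -> K -> R) : Prop :=
  (forall x, knorm (vsub x a) < r -> forall w,
      derivable_pt_lim (fun t => g (vadd x (vscale t w))) 0 (kdot (Dg x) w)) /\
  (forall x, knorm (vsub x a) < r -> forall w w',
      derivable_pt_lim (fun t => kdot (Dg (vadd x (vscale t w))) w') 0
                       (kdot (mxv (D2g x) w) w')) /\
  (forall x, knorm (vsub x a) < r -> forall eps, 0 < eps ->
      exists delta, 0 < delta /\ forall y, knorm (vsub y a) < r ->
        knorm (vsub y x) < delta -> forall k l, Rabs (D2g y k l - D2g x k l) < eps).

(* the kboundary of A is a C^2 submanifold of R^K of dimension |K|-1:
   locally a regular level set of a C^2 function *)
Definition C2_hypersurface_boundary (A : vec -> Prop) : Prop :=
  forall a, kboundary A a ->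
    exists r g Dg D2g, 0 < r /\ C2_on_ball a r g Dg D2g /\
      (exists k, Dg a k <> 0) /\
      (forall x, knorm (vsub x a) < r -> (kboundary A x <-> g x = 0)).

Definition grad_along (f : vec -> R) (x g : vec) : Prop :=
  forall eps, 0 < eps -> exists delta, 0 < delta /\
    forall s, ktangent s -> knorm s < delta ->
      Rabs (f (vadd x s) - f x - kdot g s) <= eps * knorm s.

Definition twice_diff_along (f : vec -> R) (x : vec) (H : K -> K -> R) : Prop :=
  exists r G, 0 < r /\
    (forall s, ktangent s -> knorm s < r -> grad_along f (vadd x s) (G (vadd x s))) /\
    (forall eps, 0 < eps -> exists delta, 0 < delta /\
      forall s, ktangent s -> knorm s < delta -> forall t, ktangent t ->
        Rabs (kdot (vsub (vsub (G (vadd x s)) (G x)) (mxv H s)) t)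
          <= eps * knorm s * knorm t).

Definition pos_def_along (H : K -> K -> R) : Prop :=
  forall s, ktangent s -> (exists k, s k <> 0) -> 0 < kdot s (mxv H s).

End FiniteDim.

(* An abstract expectation on a sample space Omega: a class L of
   "integrable" real random variables (a vector space containing constants)
   and a normalized, linear, monotone functional E on it.  Every probability
   space (Omega, F, P) gives one (L = integrable functions, E = expectation). *)
Record ExpSpace (Omega : Type) := {
  Lint : (Omega -> R) -> Prop;
  Ex : (Omega -> R) -> R;
  Lint_const : forall c, Lint (fun _ => c);
  Lint_add : forall f g, Lint f -> Lint g -> Lint (fun w => f w + g w);
  Lint_scale : forall c f, Lint f -> Lint (fun w => c * f w);
  Ex_add : forall f g, Lint f -> Lint g -> Ex (fun w => f w + g w) = Ex f + Ex g;
  Ex_scale : forall c f, Lint f -> Ex (fun w => c * f w) = c * Ex f;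
  Ex_mono : forall f g, Lint f -> Lint g -> (forall w, f w <= g w) -> Ex f <= Ex g;
  Ex_one : Ex (fun _ => 1) = 1
}.
Arguments Lint {Omega}.
Arguments Ex {Omega}.

(* Main.v *)
Require Import Defs.
From Stdlib Require Import Reals List ClassicalEpsilon.
From Stdlib Require Import Lra Lia FunctionalExtensionality Classical.
Open Scope R_scope.
Section Sums.
Variable K : Type.

Definition lsum (L : list K) (f : K -> R) : R := fold_right Rplus 0 (map f L).

Lemma lsum_nil f : lsum nil f = 0. Proof. reflexivity. Qed.
Lemma lsum_cons k L f : lsum (k :: L) f = f k + lsum L f. Proof. reflexivity. Qed.

Lemma lsum_plus L f g : lsum L (fun k => f k + g k) = lsum L f + lsum L g.
Proof. induction L; unfold lsum in *; simpl; [lra|]. rewrite IHL. lra. Qed.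

Lemma lsum_scal L c f : lsum L (fun k => c * f k) = c * lsum L f.
Proof. induction L; unfold lsum in *; simpl; [lra|]. rewrite IHL. lra. Qed.

Lemma lsum_minus L f g : lsum L (fun k => f k - g k) = lsum L f - lsum L g.
Proof. induction L; unfold lsum in *; simpl; [lra|]. rewrite IHL. lra. Qed.

Lemma lsum_ext L f g : (forall k, f k = g k) -> lsum L f = lsum L g.
Proof. intro H; induction L; unfold lsum in *; simpl; [lra|]. rewrite IHL, H. lra. Qed.

Lemma lsum_le L f g : (forall k, f k <= g k) -> lsum L f <= lsum L g.
Proof. intro H; induction L; unfold lsum in *; simpl; [lra|]. specialize (H a). lra. Qed.

Lemma lsum_zero L : lsum L (fun _ => 0) = 0.
Proof. induction L; unfold lsum in *; simpl; [lra|]. rewrite IHL. lra. Qed.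

Lemma lsum_nonneg L f : (forall k, 0 <= f k) -> 0 <= lsum L f.
Proof. intro H. rewrite <- (lsum_zero L). apply lsum_le; auto. Qed.

Lemma lsum_abs L f : Rabs (lsum L f) <= lsum L (fun k => Rabs (f k)).
Proof. induction L; unfold lsum in *; simpl.
 - rewrite Rabs_R0; lra.
 - eapply Rle_trans; [apply Rabs_triang|]. lra. Qed.

Lemma lsum_term L f k : (forall j, 0 <= f j) -> In k L -> f k <= lsum L f.
Proof. intros H Hin; induction L; [destruct Hin|]. unfold lsum in *; simpl.
 destruct Hin as [->|Hin].
 - pose proof (lsum_nonneg L f H). unfold lsum in H0. lra.
 - specialize (IHL Hin). specialize (H a). lra. Qed.

Lemma lsum_cv L (F : nat -> K -> R) (l : K -> R) :
  (forall k, In k L -> Un_cv (fun n => F n k) (l k)) ->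
  Un_cv (fun n => lsum L (F n)) (lsum L l).
Proof. induction L; intro H; unfold lsum in *; simpl.
 - intros e he; exists 0%nat; intros; unfold R_dist; rewrite Rminus_diag, Rabs_R0; lra.
 - apply CV_plus; [apply H; simpl; auto|]. apply IHL; intros; apply H; simpl; auto. Qed.

End Sums.
Section Vec.
Variable K : Type.
Variable enumK : list K.
Hypothesis HfullK : forall k : K, In k enumK.

Notation vec := (vec K).
Notation kdot := (kdot K enumK).
Notation knorm := (knorm K enumK).
Notation vadd := (vadd K).
Notation vsub := (vsub K).
Notation vscale := (vscale K).
Notation mxv := (mxv K enumK).
Notation ls := (lsum K enumK).

Lemma sumK_ls f : sumK K enumK f = ls f. Proof. reflexivity. Qed.

Lemma kdot_ls s v : kdot s v = ls (fun k => s k * v k). Proof. reflexivity. Qed.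

Lemma kdot_ge0 s : 0 <= kdot s s.
Proof. rewrite kdot_ls. apply lsum_nonneg; intro; nra. Qed.

Lemma knorm_ge0 s : 0 <= knorm s.
Proof. apply sqrt_pos. Qed.

Lemma knorm_sq s : knorm s ^ 2 = kdot s s.
Proof. unfold Defs.knorm. rewrite pow2_sqrt; [reflexivity|apply kdot_ge0]. Qed.

Lemma coord_le s k : Rabs (s k) <= knorm s.
Proof.
  assert (H : s k * s k <= kdot s s).
  { rewrite kdot_ls. apply (lsum_term K enumK (fun k => s k * s k)); auto. intro; nra. }
  rewrite <- sqrt_Rsqr_abs. unfold Defs.knorm. apply sqrt_le_1_alt. unfold Rsqr. exact H.
Qed.

Lemma knorm_pos s k : s k <> 0 -> 0 < knorm s.
Proof. intro H. pose proof (coord_le s k). pose proof (Rabs_pos_lt _ H). lra. Qed.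

Lemma kdot_sym s v : kdot s v = kdot v s.
Proof. rewrite !kdot_ls. apply lsum_ext; intro; ring. Qed.

Lemma kdot_scale_l t s v : kdot (vscale t s) v = t * kdot s v.
Proof. rewrite !kdot_ls, <- lsum_scal. apply lsum_ext; intro; unfold Defs.vscale; ring. Qed.

Lemma kdot_scale_r t s v : kdot s (vscale t v) = t * kdot s v.
Proof. rewrite kdot_sym, kdot_scale_l, kdot_sym. reflexivity. Qed.

Lemma kdot_sub_l a b v : kdot (vsub a b) v = kdot a v - kdot b v.
Proof. rewrite !kdot_ls, <- lsum_minus. apply lsum_ext; intro; unfold Defs.vsub; ring. Qed.

Lemma kdot_add_l a b v : kdot (vadd a b) v = kdot a v + kdot b v.
Proof. rewrite !kdot_ls, <- lsum_plus. apply lsum_ext; intro; unfold Defs.vadd; ring. Qed.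

Lemma knorm_scale t s : knorm (vscale t s) = Rabs t * knorm s.
Proof.
  unfold Defs.knorm. rewrite kdot_scale_l, kdot_scale_r, <- Rmult_assoc.
  rewrite (sqrt_mult_alt (t * t)); [|nra]. rewrite <- sqrt_Rsqr_abs. unfold Rsqr. reflexivity.
Qed.

Lemma mxv_scale (H : K -> K -> R) t s : mxv H (vscale t s) = vscale t (mxv H s).
Proof. apply functional_extensionality; intro k. unfold Defs.mxv, Defs.vscale.
  change (sumK K enumK) with ls; rewrite <- lsum_scal. apply lsum_ext; intro; ring. Qed.

Lemma dot_bound g s B : (forall k, Rabs (s k) <= B) ->
  Rabs (kdot g s) <= ls (fun k => Rabs (g k)) * B.
Proof. intro HB. rewrite kdot_ls. eapply Rle_trans; [apply lsum_abs|].
  rewrite Rmult_comm, <- lsum_scal. apply lsum_le; intro k.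
  rewrite Rabs_mult. specialize (HB k). pose proof (Rabs_pos (g k)). nra. Qed.

Definition CH (H : K -> K -> R) := ls (fun k => ls (fun l => Rabs (H k l))).

Lemma CH_ge0 H : 0 <= CH H.
Proof. apply lsum_nonneg; intro; apply lsum_nonneg; intro; apply Rabs_pos. Qed.

Lemma quad_bound H s : Rabs (kdot s (mxv H s)) <= CH H * knorm s ^ 2.
Proof.
  rewrite kdot_sym. eapply Rle_trans; [apply (dot_bound _ s (knorm s)); intro; apply coord_le|].
  unfold CH. replace (knorm s ^ 2) with (knorm s * knorm s) by ring.
  rewrite <- Rmult_assoc. apply Rmult_le_compat_r; [apply knorm_ge0|].
  rewrite Rmult_comm, <- lsum_scal. apply lsum_le; intro k.
  unfold Defs.mxv. change (sumK K enumK) with ls. eapply Rle_trans; [apply lsum_abs|].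
  rewrite <- lsum_scal. apply lsum_le; intro l. simpl.
  rewrite Rabs_mult. pose proof (coord_le s l). pose proof (Rabs_pos (H k l)). nra.
Qed.

Lemma tangent_scale t s : ktangent K enumK s -> ktangent K enumK (vscale t s).
Proof. unfold ktangent. change (sumK K enumK) with ls. intro H. unfold Defs.vscale. rewrite lsum_scal, H. ring. Qed.

End Vec.
Fixpoint mkseq (F : nat -> nat -> nat) (n : nat) : nat :=
  match n with 0%nat => F 0%nat 0%nat | S n' => F (S (mkseq F n')) (S n') end.

Lemma incr_lt (f : nat -> nat) : (forall n, (f n < f (S n))%nat) ->
  forall n m, (n < m)%nat -> (f n < f m)%nat.
Proof. intros H n m Hnm. induction Hnm.
 - apply H.
 - specialize (H m). Lia.lia. Qed.

Lemma incr_ge (f : nat -> nat) : (forall n, (f n < f (S n))%nat) -> forall n, (n <= f n)%nat.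
Proof. intros H n; induction n; [Lia.lia|]. specialize (H n). Lia.lia. Qed.

Lemma incr_le (f : nat -> nat) : (forall n, (f n < f (S n))%nat) ->
  forall n m, (n <= m)%nat -> (f n <= f m)%nat.
Proof. intros H n m Hnm. destruct (Nat.eq_dec n m) as [->|Hne]; [Lia.lia|].
  assert (n < m)%nat by Lia.lia. pose proof (incr_lt f H n m H0). Lia.lia. Qed.

Lemma cv_subseq (u : nat -> R) l (f : nat -> nat) : (forall n, (f n < f (S n))%nat) ->
  Un_cv u l -> Un_cv (fun n => u (f n)) l.
Proof. intros Hf Hu e he. destruct (Hu e he) as [N HN]. exists N. intros n Hn.
  apply HN. pose proof (incr_ge f Hf n). Lia.lia. Qed.

Lemma inv_small eps : 0 < eps -> exists N : nat, forall n, (N <= n)%nat -> / (INR n + 1) < eps.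
Proof. intro he. destruct (archimed_cor1 eps he) as [N [HN HN0]]. exists N. intros n Hn.
  assert (HNr : 0 < INR N) by (apply lt_0_INR; Lia.lia).
  assert (INR N <= INR n) by (apply le_INR; exact Hn).
  eapply Rle_lt_trans; [|exact HN]. apply Rinv_le_contravar; lra. Qed.

Lemma subseq_of_adh (u : nat -> R) l : ValAdh u l ->
  exists f : nat -> nat, (forall n, (f n < f (S n))%nat) /\ Un_cv (fun n => u (f n)) l.
Proof.
  intro Hadh.
  assert (Hp : forall N m : nat, exists p, (N <= p)%nat /\ Rabs (u p - l) < / (INR m + 1)).
  { intros N m. assert (hpos : 0 < / (INR m + 1)).
    { apply Rinv_0_lt_compat. pose proof (pos_INR m). lra. }
    apply (Hadh (fun y => Rabs (y - l) < / (INR m + 1)) N).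
    exists (mkposreal _ hpos). intros y Hy. unfold disc in Hy. exact Hy. }
  set (F := fun N m => proj1_sig (constructive_indefinite_description _ (Hp N m))).
  assert (HF : forall N m, (N <= F N m)%nat /\ Rabs (u (F N m) - l) < / (INR m + 1)).
  { intros N m. unfold F. destruct (constructive_indefinite_description _ (Hp N m)). simpl. exact a. }
  exists (mkseq F). split.
  - intro n. simpl. destruct (HF (S (mkseq F n)) (S n)). Lia.lia.
  - assert (Hc : forall n, Rabs (u (mkseq F n) - l) < / (INR n + 1)).
    { intro n; destruct n; simpl; apply HF. }
    intros e he. destruct (inv_small e he) as [N HN]. exists N. intros n Hn.
    unfold R_dist. specialize (Hc n). specialize (HN n Hn). lra.
Qed.

Section BW.
Variable K : Type.

Lemma bwK (L : list K) (x : nat -> K -> R) M : (forall n k, Rabs (x n k) <= M) ->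
  exists (f : nat -> nat) (y : K -> R), (forall n, (f n < f (S n))%nat) /\
    forall k, In k L -> Un_cv (fun n => x (f n) k) (y k).
Proof.
  intro HM. induction L as [|a L IH].
  - exists (fun n => n), (fun _ => 0). split; [intro; Lia.lia|intros k []].
  - destruct IH as [f [y [Hf Hy]]].
    destruct (Bolzano_Weierstrass (fun n => x (f n) a) (fun c => -M <= c <= M) (compact_P3 (-M) M))
      as [l Hl].
    { intro n. specialize (HM (f n) a). unfold Rabs in HM; destruct (Rcase_abs (x (f n) a)); lra. }
    destruct (subseq_of_adh _ _ Hl) as [g [Hg Hgl]].
    exists (fun n => f (g n)), (fun j => if excluded_middle_informative (j = a) then l else y j).
    split.
    + intro n. apply (incr_lt f Hf). apply Hg.
    + intros k Hk. destruct (excluded_middle_informative (k = a)) as [->|Hne].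
      * exact Hgl.
      * destruct Hk as [Hk|Hk]; [congruence|].
        apply (cv_subseq (fun n => x (f n) k)); auto.
Qed.
End BW.
Lemma cv_const c : Un_cv (fun _ => c) c.
Proof. intros e he; exists 0%nat; intros; unfold R_dist; rewrite Rminus_diag, Rabs_R0; lra. Qed.

Lemma sqrt_small x e : 0 <= x -> 0 < e -> x < e * e -> sqrt x < e.
Proof. intros. rewrite <- (sqrt_square e) by lra. apply sqrt_lt_1_alt. lra. Qed.

Lemma inv_seq_cv (f : nat -> nat) : (forall n, (f n < f (S n))%nat) ->
  Un_cv (fun n => / (INR (f n) + 1)) 0.
Proof. intros Hf e he. destruct (inv_small e he) as [N HN]. exists N. intros n Hn.
  unfold R_dist. rewrite Rminus_0_r. rewrite Rabs_right.
  - apply HN. pose proof (incr_ge f Hf n). Lia.lia.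
  - apply Rle_ge, Rlt_le, Rinv_0_lt_compat. pose proof (pos_INR (f n)). lra. Qed.

Section Cpt.
Variable K : Type.
Variable enumK : list K.
Hypothesis HfullK : forall k : K, In k enumK.

Notation vec := (vec K).
Notation kdot := (kdot K enumK).
Notation knorm := (knorm K enumK).
Notation vadd := (vadd K).
Notation vsub := (vsub K).
Notation vscale := (vscale K).
Notation mxv := (mxv K enumK).
Notation ls := (lsum K enumK).

Lemma cv_dot (x z : nat -> vec) (y w : vec) :
  (forall k, Un_cv (fun n => x n k) (y k)) -> (forall k, Un_cv (fun n => z n k) (w k)) ->
  Un_cv (fun n => kdot (x n) (z n)) (kdot y w).
Proof. intros Hx Hz. apply (lsum_cv K enumK (fun n k => x n k * z n k)).
  intros k _. apply CV_mult; auto. Qed.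

Lemma cv_mxv H (x : nat -> vec) (y : vec) :
  (forall k, Un_cv (fun n => x n k) (y k)) -> forall k, Un_cv (fun n => mxv H (x n) k) (mxv H y k).
Proof. intros Hx k. apply (lsum_cv K enumK (fun n l => H k l * x n l)).
  intros l _. apply CV_mult; [apply cv_const|auto]. Qed.

Lemma cv_sum (x : nat -> vec) (y : vec) :
  (forall k, Un_cv (fun n => x n k) (y k)) -> Un_cv (fun n => sumK K enumK (x n)) (sumK K enumK y).
Proof. intros Hx. apply (lsum_cv K enumK x). auto. Qed.

Lemma max_exists (A : vec -> Prop) : knonempty K A -> kcompact K enumK A ->
  forall p, exists v, is_max_value K enumK A p v.
Proof.
  intros [a0 Ha0] [Hcl [M HM]] p.
  set (E := fun r => exists a, A a /\ r = kdot p a).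
  assert (HbE : bound E).
  { exists (ls (fun k => Rabs (p k)) * M). intros r [a [Ha ->]].
    eapply Rle_trans; [apply Rle_abs|]. apply dot_bound. intro k.
    eapply Rle_trans; [apply coord_le; auto|]. apply HM; auto. }
  destruct (completeness E HbE (ex_intro _ (kdot p a0) (ex_intro _ a0 (conj Ha0 eq_refl))))
    as [S [HSub HSl]].
  assert (Hn : forall n : nat, exists a, A a /\ S - / (INR n + 1) < kdot p a).
  { intro n. apply Classical_Prop.NNPP. intro Hno.
    assert (Hub : is_upper_bound E (S - / (INR n + 1))).
    { intros r [a [Ha ->]]. apply Rnot_lt_le. intro Hlt. apply Hno. exists a; auto. }
    specialize (HSl _ Hub). assert (0 < / (INR n + 1)).
    { apply Rinv_0_lt_compat. pose proof (pos_INR n). lra. } lra. }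
  set (a := fun n => proj1_sig (constructive_indefinite_description _ (Hn n))).
  assert (Ha : forall n, A (a n) /\ S - / (INR n + 1) < kdot p (a n)).
  { intro n. unfold a. destruct (constructive_indefinite_description _ (Hn n)). exact a1. }
  destruct (bwK K enumK a M) as [f [y [Hf Hy]]].
  { intros n k. eapply Rle_trans; [apply coord_le; auto|]. apply HM, Ha. }
  assert (Hy' : forall k, Un_cv (fun n => a (f n) k) (y k)) by (intro; apply Hy; auto).
  assert (HyA : A y).
  { apply Hcl. intros eps he.
    assert (Hd : Un_cv (fun n => kdot (vsub y (a (f n))) (vsub y (a (f n))))
                   (kdot (vsub y y) (vsub y y))).
    { assert (Hk : forall k, Un_cv (fun n => vsub y (a (f n)) k) (vsub y y k)).
      { intro k. unfold Defs.vsub. apply CV_minus; [apply cv_const|auto]. }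
      apply cv_dot; auto. }
    assert (H0 : kdot (vsub y y) (vsub y y) = 0).
    { rewrite kdot_ls. rewrite <- (lsum_zero K enumK). apply lsum_ext. intro; unfold Defs.vsub; ring. }
    rewrite H0 in Hd. destruct (Hd (eps * eps)) as [N HN]; [nra|].
    exists (a (f N)). split; [apply Ha|]. specialize (HN N (Nat.le_refl N)).
    unfold R_dist in HN. rewrite Rminus_0_r in HN. unfold Defs.knorm.
    apply sqrt_small; auto; [apply kdot_ge0|]. eapply Rle_lt_trans; [apply Rle_abs|exact HN]. }
  assert (Hcvp : Un_cv (fun n => kdot p (a (f n))) (kdot p y)).
  { apply cv_dot; auto. intro; apply cv_const. }
  exists S. split.
  - exists y. split; auto. apply Rle_antisym.
    + assert (Hle : forall n, kdot p (a (f n)) <= S).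
      { intro n. apply HSub. exists (a (f n)). split; auto. apply Ha. }
      exact (Rle_cv_lim Hle Hcvp (cv_const S)).
    + assert (Hle : forall n, S - / (INR (f n) + 1) <= kdot p (a (f n))).
      { intro n. left. apply Ha. }
      assert (Hc : Un_cv (fun n => S - / (INR (f n) + 1)) S).
      { pose proof (CV_minus _ _ _ _ (cv_const S) (inv_seq_cv f Hf)) as Hc.
        rewrite Rminus_0_r in Hc. exact Hc. }
      exact (Rle_cv_lim Hle Hc Hcvp).
  - intros b Hb. apply HSub. exists b; auto.
Qed.

Lemma posdef_const H : pos_def_along K enumK H ->
  exists lam, 0 < lam /\ forall s, ktangent K enumK s -> lam * knorm s ^ 2 <= kdot s (mxv H s).
Proof.
  intro Hpd. apply Classical_Prop.NNPP. intro Hno.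
  assert (Hn : forall n : nat, exists u, ktangent K enumK u /\ knorm u = 1 /\
                                   kdot u (mxv H u) < / (INR n + 1)).
  { intro n. assert (hpos : 0 < / (INR n + 1)).
    { apply Rinv_0_lt_compat. pose proof (pos_INR n). lra. }
    apply Classical_Prop.NNPP. intro Hno2. apply Hno. exists (/ (INR n + 1)). split; auto.
    intros s Hs. apply Rnot_lt_le. intro Hlt.
    assert (Hsp : 0 < knorm s).
    { destruct (Rle_lt_or_eq_dec 0 (knorm s) (knorm_ge0 _ _ s)) as [h|h]; auto.
      pose proof (quad_bound K enumK HfullK H s). rewrite <- h in H0.
      pose proof (CH_ge0 K enumK H).
      assert (Hz : Rabs (kdot s (mxv H s)) <= 0) by (simpl in H0; nra).
      rewrite <- h in Hlt. unfold Rabs in Hz. destruct (Rcase_abs (kdot s (mxv H s))); nra. }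
    apply Hno2. exists (vscale (/ knorm s) s). split; [apply tangent_scale; auto|split].
    - rewrite knorm_scale. rewrite Rabs_right by (apply Rle_ge, Rlt_le, Rinv_0_lt_compat; auto).
      field. lra.
    - rewrite mxv_scale, kdot_scale_l, kdot_scale_r.
      apply (Rmult_lt_reg_r (knorm s ^ 2)); [nra|].
      replace (/ knorm s * (/ knorm s * kdot s (mxv H s)) * knorm s ^ 2) with (kdot s (mxv H s))
        by (field; lra). lra. }
  set (u := fun n => proj1_sig (constructive_indefinite_description _ (Hn n))).
  assert (Hu : forall n, ktangent K enumK (u n) /\ knorm (u n) = 1 /\
                         kdot (u n) (mxv H (u n)) < / (INR n + 1)).
  { intro n. unfold u. destruct (constructive_indefinite_description _ (Hn n)). exact a. }
  destruct (bwK K enumK u 1) as [f [y [Hf Hy]]].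
  { intros n k. rewrite <- (proj1 (proj2 (Hu n))). apply coord_le; auto. }
  assert (Hy' : forall k, Un_cv (fun n => u (f n) k) (y k)) by (intro; apply Hy; auto).
  assert (Hyt : ktangent K enumK y).
  { unfold ktangent. apply (UL_sequence (fun n => sumK K enumK (u (f n)))).
    - apply cv_sum; auto.
    - intros e he; exists 0%nat; intros n _. unfold R_dist. destruct (Hu (f n)) as [Ht _].
      unfold ktangent in Ht. rewrite Ht, Rminus_diag, Rabs_R0. lra. }
  assert (Hyn : kdot y y = 1).
  { apply (UL_sequence (fun n => kdot (u (f n)) (u (f n)))).
    - apply cv_dot; auto.
    - intros e he; exists 0%nat; intros n _. unfold R_dist. destruct (Hu (f n)) as [_ [Hn1 _]].
      rewrite <- knorm_sq, Hn1. replace (1 ^ 2 - 1) with 0 by ring. rewrite Rabs_R0. lra. }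
  assert (Hynz : exists k, y k <> 0).
  { apply Classical_Prop.NNPP. intro Hz.
    assert (kdot y y = 0).
    { rewrite kdot_ls, <- (lsum_zero K enumK). apply lsum_ext. intro k.
      assert (y k = 0) by (apply Classical_Prop.NNPP; intro; apply Hz; exists k; auto).
      rewrite H0; ring. }
    lra. }
  pose proof (Hpd y Hyt Hynz).
  assert (kdot y (mxv H y) <= 0).
  { assert (Hle : forall n, kdot (u (f n)) (mxv H (u (f n))) <= / (INR (f n) + 1)).
    { intro n. left. apply Hu. }
    assert (Hc : Un_cv (fun n => kdot (u (f n)) (mxv H (u (f n)))) (kdot y (mxv H y))).
    { apply cv_dot; auto. apply cv_mxv; auto. }
    exact (Rle_cv_lim Hle Hc (inv_seq_cv f Hf)). }
  lra.
Qed.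

End Cpt.
Lemma div_bound u h b e : h <> 0 -> Rabs u <= b * Rabs h -> b < e -> Rabs (u / h) < e.
Proof. intros Hh Hu Hb. unfold Rdiv. rewrite Rabs_mult, Rabs_inv.
  assert (Hp : 0 < Rabs h) by (apply Rabs_pos_lt; auto).
  apply (Rmult_lt_reg_r (Rabs h)); auto. rewrite Rmult_assoc, Rinv_l by lra. nra. Qed.

Lemma deriv_quad a Q c : derivable_pt_lim (fun t => a * t + Q / 2 * (t * t)) c (a + Q * c).
Proof. intros e he.
  assert (hd : 0 < e / (Rabs Q + 1)) by (apply Rdiv_lt_0_compat; [lra|pose proof (Rabs_pos Q); lra]).
  exists (mkposreal _ hd). simpl. intros h Hh Hhd.
  replace ((a * (c + h) + Q / 2 * ((c + h) * (c + h)) - (a * c + Q / 2 * (c * c))) / h - (a + Q * c))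
    with (Q / 2 * h) by (field; auto).
  rewrite Rabs_mult. assert (HQ : Rabs (Q/2) <= Rabs Q).
  { unfold Rdiv. rewrite Rabs_mult, Rabs_inv, (Rabs_right 2) by lra. pose proof (Rabs_pos Q). lra. }
  pose proof (Rabs_pos Q). pose proof (Rabs_pos h). pose proof (Rabs_pos (Q/2)).
  apply (Rmult_lt_compat_r (Rabs Q + 1)) in Hhd; [|lra].
  unfold Rdiv in Hhd. rewrite Rmult_assoc, Rinv_l in Hhd by lra. nra. Qed.

Section Taylor.
Variable K : Type.
Variable enumK : list K.

Notation vec := (vec K).
Notation kdot := (kdot K enumK).
Notation knorm := (knorm K enumK).
Notation vadd := (vadd K).
Notation vsub := (vsub K).
Notation vscale := (vscale K).
Notation mxv := (mxv K enumK).

Lemma deriv_line f x s (gy : vec) : ktangent K enumK s -> grad_along K enumK f x gy ->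
  derivable_pt_lim (fun h => f (vadd x (vscale h s))) 0 (kdot gy s).
Proof.
  intros Hs Hg e he. set (n := knorm s). assert (hn : 0 <= n) by apply knorm_ge0.
  assert (he' : 0 < e / (2 * (n + 1))) by (apply Rdiv_lt_0_compat; lra).
  destruct (Hg _ he') as [d [Hd Hd']].
  assert (hdd : 0 < d / (n + 1)) by (apply Rdiv_lt_0_compat; lra).
  exists (mkposreal _ hdd). simpl. intros h Hh Hhd.
  assert (E0 : vadd x (vscale 0 s) = x).
  { apply functional_extensionality; intro k; unfold Defs.vadd, Defs.vscale; ring. }
  assert (E1 : vadd x (vscale (0 + h) s) = vadd x (vscale h s)).
  { f_equal. f_equal. ring. }
  rewrite E0, E1.
  assert (Hsn : knorm (vscale h s) < d).
  { rewrite knorm_scale. fold n. pose proof (Rabs_pos h).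
    apply (Rmult_lt_compat_r (n + 1)) in Hhd; [|lra]. unfold Rdiv in Hhd.
    rewrite Rmult_assoc, Rinv_l in Hhd by lra. nra. }
  specialize (Hd' _ (tangent_scale K enumK h s Hs) Hsn).
  rewrite kdot_scale_r, knorm_scale in Hd'. fold n in Hd'.
  replace ((f (vadd x (vscale h s)) - f x) / h - kdot gy s)
    with ((f (vadd x (vscale h s)) - f x - h * kdot gy s) / h) by (field; auto).
  apply (div_bound _ _ (e / (2 * (n + 1)) * n)); auto.
  - eapply Rle_trans; [exact Hd'|]. right; ring.
  - unfold Rdiv. rewrite Rinv_mult. 
    assert (0 < / (n + 1)) by (apply Rinv_0_lt_compat; lra).
    assert (n * / (n + 1) < 1).
    { apply (Rmult_lt_reg_r (n + 1)); [lra|]. rewrite Rmult_assoc, Rinv_l by lra. lra. }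
    assert (0 < / 2) by lra. nra.
Qed.

Lemma taylor f x H : twice_diff_along K enumK f x H ->
  exists g0 : vec, forall eps, 0 < eps -> exists delta, 0 < delta /\
    forall s, ktangent K enumK s -> knorm s < delta ->
      Rabs (f (vadd x s) - f x - kdot g0 s - / 2 * kdot s (mxv H s)) <= eps * knorm s ^ 2.
Proof.
  intros [r [G [Hr [Hgrad Hder]]]]. exists (G x). intros eps he.
  destruct (Hder eps he) as [d1 [Hd1 Hd1']].
  exists (Rmin (r / 2) d1). split; [apply Rmin_pos; lra|].
  intros s Hs Hsn.
  assert (Hsr : knorm s < r / 2) by (eapply Rlt_le_trans; [exact Hsn|apply Rmin_l]).
  assert (Hsd : knorm s < d1) by (eapply Rlt_le_trans; [exact Hsn|apply Rmin_r]).
  set (Q := kdot s (mxv H s)). set (a := kdot (G x) s).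
  set (g := fun t => f (vadd x (vscale t s))).
  assert (Hdg : forall t, Rabs t < 2 ->
            derivable_pt_lim g t (kdot (G (vadd x (vscale t s))) s)).
  { intros t Ht. set (y := vadd x (vscale t s)).
    assert (Hty : knorm (vscale t s) < r).
    { rewrite knorm_scale. pose proof (knorm_ge0 K enumK s). pose proof (Rabs_pos t). nra. }
    pose proof (deriv_line f y s _ Hs (Hgrad _ (tangent_scale K enumK t s Hs) Hty)) as D.
    intros e he'. destruct (D e he') as [dl Hdl]. exists dl. intros h Hh Hhl.
    specialize (Hdl h Hh Hhl).
    assert (Eq1 : g (t + h) = f (vadd y (vscale (0 + h) s))).
    { unfold g, y. f_equal. apply functional_extensionality; intro k.
      unfold Defs.vadd, Defs.vscale. ring. }
    assert (Eq2 : g t = f (vadd y (vscale 0 s))).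
    { unfold g, y. f_equal. apply functional_extensionality; intro k.
      unfold Defs.vadd, Defs.vscale. ring. }
    rewrite Eq1, Eq2. exact Hdl. }
  set (phi := fun t => g t - (a * t + Q / 2 * (t * t))).
  set (phi' := fun t => kdot (G (vadd x (vscale t s))) s - (a + Q * t)).
  assert (Hphi : forall c, 0 <= c <= 1 -> derivable_pt_lim phi c (phi' c)).
  { intros c Hc. unfold phi, phi'.
    pose proof (derivable_pt_lim_minus _ _ _ _ _ (Hdg c ltac:(rewrite Rabs_right; lra))
                   (deriv_quad a Q c)) as D. exact D. }
  destruct (MVT_cor2 phi phi' 0 1 Rlt_0_1 Hphi) as [c [Hc Hc01]].
  assert (E1 : phi 1 = f (vadd x s) - a - Q / 2).
  { unfold phi, g. replace (vscale 1 s) with s; [ring|].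
    apply functional_extensionality; intro k; unfold Defs.vscale; ring. }
  assert (E0 : phi 0 = f x).
  { unfold phi, g. replace (vadd x (vscale 0 s)) with x; [ring|].
    apply functional_extensionality; intro k; unfold Defs.vadd, Defs.vscale; ring. }
  rewrite E1, E0 in Hc.
  replace (f (vadd x s) - f x - a - / 2 * Q) with (phi' c)
    by (rewrite Rminus_0_r, Rmult_1_r in Hc; rewrite <- Hc; field).
  unfold phi'.
  assert (Hcs : knorm (vscale c s) < d1).
  { rewrite knorm_scale, Rabs_right by lra. pose proof (knorm_ge0 K enumK s). nra. }
  specialize (Hd1' _ (tangent_scale K enumK c s Hs) Hcs s Hs).
  rewrite !kdot_sub_l, mxv_scale, kdot_scale_l, (kdot_sym _ _ (mxv H s)) in Hd1'.
  fold Q a in Hd1'.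
  replace (kdot (G (vadd x (vscale c s))) s - (a + Q * c))
    with (kdot (G (vadd x (vscale c s))) s - a - c * Q) by ring.
  eapply Rle_trans; [exact Hd1'|].
  rewrite knorm_scale, Rabs_right by lra. pose proof (knorm_ge0 K enumK s).
  assert (0 <= eps * (knorm s * knorm s)) by (apply Rmult_le_pos; nra).
  replace (eps * (c * knorm s) * knorm s) with (c * (eps * (knorm s * knorm s))) by ring.
  replace (eps * knorm s ^ 2) with (1 * (eps * (knorm s * knorm s))) by ring.
  apply Rmult_le_compat_r; lra.
Qed.
End Taylor.
Section Exp.
Variable Omega : Type.
Variable P : ExpSpace Omega.

Lemma Ex_ext f g : (forall w, f w = g w) -> Ex P f = Ex P g.
Proof. intro H. f_equal. apply functional_extensionality; auto. Qed.

Lemma Ex_const c : Ex P (fun _ => c) = c.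
Proof. rewrite (Ex_ext (fun _ => c) (fun _ => c * 1)) by (intro; ring).
  rewrite (Ex_scale _ P c (fun _ => 1)) by apply Lint_const. rewrite Ex_one. ring. Qed.

Lemma Ex_lsum (K : Type) (L : list K) (F : Omega -> K -> R) :
  (forall k, Lint P (fun w => F w k)) ->
  Lint P (fun w => lsum K L (F w)) /\
  Ex P (fun w => lsum K L (F w)) = lsum K L (fun k => Ex P (fun w => F w k)).
Proof. intro HF. induction L as [|a L [IH1 IH2]].
  - split; [apply (Lint_const _ P 0)|apply (Ex_const 0)].
  - split.
    + apply (Lint_add _ P (fun w => F w a) (fun w => lsum K L (F w))); auto.
    + change (Ex P (fun w => F w a + lsum K L (F w)) = Ex P (fun w => F w a) + lsum K L (fun k => Ex P (fun w => F w k))).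
      rewrite Ex_add; auto. rewrite IH2. reflexivity.
Qed.
End Exp.

Section Main.
Variable K : Type.
Variable enumK : list K.
Hypothesis HfullK : forall k : K, In k enumK.

Notation vec := (vec K).
Notation kdot := (kdot K enumK).
Notation knorm := (knorm K enumK).
Notation vadd := (vadd K).
Notation vsub := (vsub K).
Notation vscale := (vscale K).
Notation mxv := (mxv K enumK).
Notation ls := (lsum K enumK).

Lemma simplex_le1 q k : in_simplex K enumK q -> 0 <= q k <= 1.
Proof. intros [H0 H1]. split; auto. rewrite <- H1.
  apply (lsum_term K enumK q k); auto. Qed.

Lemma simplex_tangent q p : in_simplex K enumK q -> in_simplex K enumK p -> ktangent K enumK (vsub q p).
Proof. intros [_ Hq] [_ Hp]. unfold ktangent, Defs.vsub. change (sumK K enumK) with ls.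
  rewrite lsum_minus. change (ls q = 1) in Hq. change (ls p = 1) in Hp. rewrite Hq, Hp. ring. Qed.

Lemma simplex_dist q p : in_simplex K enumK q -> in_simplex K enumK p -> knorm (vsub q p) ^ 2 <= 2.
Proof. intros Hq Hp. rewrite knorm_sq, kdot_ls.
  destruct Hq as [Hq0 Hq1]. destruct Hp as [Hp0 Hp1].
  change (ls q = 1) in Hq1. change (ls p = 1) in Hp1.
  apply Rle_trans with (ls (fun k => q k + p k)).
  - apply lsum_le. intro k. unfold Defs.vsub.
    pose proof (simplex_le1 q k (conj Hq0 Hq1)). pose proof (simplex_le1 p k (conj Hp0 Hp1)). nra.
  - rewrite lsum_plus. lra. Qed.

Lemma vA_spec A p : (exists v, is_max_value K enumK A p v) -> is_max_value K enumK A p (vA K enumK A p).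
Proof. intro H. unfold vA. apply epsilon_spec. exact H. Qed.

Lemma vA_convex A : (forall p, is_max_value K enumK A p (vA K enumK A p)) ->
  forall x y t, 0 <= t <= 1 ->
  vA K enumK A (vadd (vscale (1 - t) x) (vscale t y)) <= (1 - t) * vA K enumK A x + t * vA K enumK A y.
Proof. intros Hm x y t Ht.
  destruct (Hm (vadd (vscale (1 - t) x) (vscale t y))) as [[a [Ha Hv]] _].
  rewrite <- Hv. rewrite kdot_add_l, !kdot_scale_l.
  destruct (Hm x) as [_ Hx]. destruct (Hm y) as [_ Hy].
  specialize (Hx a Ha). specialize (Hy a Ha). nra. Qed.

Lemma vA_bound A M : (forall p, is_max_value K enumK A p (vA K enumK A p)) ->
  (forall a, A a -> knorm a <= M) ->
  forall q, in_simplex K enumK q -> Rabs (vA K enumK A q) <= Rabs M.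
Proof. intros Hm HM q Hq. destruct (Hm q) as [[a [Ha Hv]] _]. rewrite <- Hv.
  eapply Rle_trans; [apply (dot_bound K enumK q a (Rabs M))|].
  - intro k. eapply Rle_trans; [apply coord_le; auto|]. eapply Rle_trans; [apply HM; auto|apply Rle_abs].
  - replace (ls (fun k => Rabs (q k))) with 1; [lra|].
    destruct Hq as [Hq0 Hq1]. rewrite <- Hq1. apply lsum_ext. intro k. rewrite Rabs_right; auto.
    apply Rle_ge; auto. Qed.

End Main.
Section Key.
Variable K : Type.
Variable enumK : list K.
Hypothesis HfullK : forall k : K, In k enumK.

Notation vec := (vec K).
Notation kdot := (kdot K enumK).
Notation knorm := (knorm K enumK).
Notation vadd := (vadd K).
Notation vsub := (vsub K).
Notation vscale := (vscale K).
Notation ls := (lsum K enumK).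

Lemma key (f : vec -> R) (p0 g0 : vec) (lam d CHH Mb : R) :
  0 < lam -> 0 < d -> 0 <= CHH -> 0 <= Mb -> in_simplex K enumK p0 ->
  (forall s, ktangent K enumK s -> knorm s < d ->
     lam / 4 * knorm s ^ 2 <= f (vadd p0 s) - f p0 - kdot g0 s <= (CHH / 2 + lam / 4) * knorm s ^ 2) ->
  (forall q, in_simplex K enumK q -> Rabs (f q) <= Mb) ->
  (forall x y t, 0 <= t <= 1 -> f (vadd (vscale (1 - t) x) (vscale t y)) <= (1 - t) * f x + t * f y) ->
  exists C c, 0 < C /\ 0 < c /\ forall q, in_simplex K enumK q ->
    c * knorm (vsub q p0) ^ 2 <= f q - f p0 - kdot g0 (vsub q p0) <= C * knorm (vsub q p0) ^ 2.
Proof.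
  intros Hlam Hd HCH HMb Hp0 Hloc Hbd Hconv.
  set (G1 := ls (fun k => Rabs (g0 k))).
  assert (HG1 : 0 <= G1) by (apply lsum_nonneg; intro; apply Rabs_pos).
  set (B := 2 * Mb + G1).
  assert (HB : 0 <= B) by (unfold B; lra).
  assert (Hdd : 0 < d * d) by nra.
  set (C := CHH / 2 + lam / 4 + B / (d * d) + 1).
  assert (HBd : 0 <= B / (d * d)) by (unfold Rdiv; apply Rmult_le_pos; [lra|left; apply Rinv_0_lt_compat; lra]).
  set (c := Rmin (lam / 4) (lam * d / 16)).
  assert (Hc0 : 0 < c) by (apply Rmin_pos; nra).
  exists C, c. split; [unfold C; lra|]. split; [exact Hc0|].
  intros q Hq. set (s := vsub q p0).
  assert (Hs : ktangent K enumK s) by (apply simplex_tangent; auto).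
  assert (Eq : vadd p0 s = q).
  { apply functional_extensionality; intro k; unfold s, Defs.vadd, Defs.vsub; ring. }
  set (n := knorm s). assert (hn : 0 <= n) by apply knorm_ge0.
  assert (hn2 : n ^ 2 <= 2) by (apply simplex_dist; auto).
  assert (hcl : c <= lam / 4) by apply Rmin_l.
  assert (hcr : c <= lam * d / 16) by apply Rmin_r.
  destruct (Rlt_le_dec n d) as [Hlt|Hge].
  - specialize (Hloc s Hs Hlt). rewrite Eq in Hloc. fold n in Hloc.
    assert (0 <= n ^ 2) by nra. split.
    + apply Rle_trans with (lam / 4 * n ^ 2); [|apply Hloc]. nra.
    + eapply Rle_trans; [apply Hloc|]. unfold C. nra.
  - assert (Hfq := Hbd q Hq). assert (Hfp := Hbd p0 Hp0).
    assert (Hlin : Rabs (kdot g0 s) <= G1 * 1).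
    { apply dot_bound. intro k. unfold s, Defs.vsub.
      pose proof (simplex_le1 K enumK HfullK q k Hq). pose proof (simplex_le1 K enumK HfullK p0 k Hp0).
      apply Rabs_le. lra. }
    assert (Hup : f q - f p0 - kdot g0 s <= B).
    { unfold B. pose proof (Rle_abs (f q)). pose proof (Rle_abs (- f p0)). rewrite Rabs_Ropp in H0.
      pose proof (Rle_abs (- kdot g0 s)). rewrite Rabs_Ropp in H1. lra. }
    assert (hnd : d * d <= n ^ 2) by nra.
    split.
    + set (t := (d / 2) / n).
      assert (hnp : 0 < n) by lra.
      assert (ht0 : 0 < t) by (unfold t; apply Rdiv_lt_0_compat; lra).
      assert (htn : t * n = d / 2) by (unfold t; field; lra).
      assert (ht1 : t <= 1) by (apply (Rmult_le_reg_r n); [lra|]; rewrite htn; lra).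
      set (s' := vscale t s).
      assert (Hs' : ktangent K enumK s') by (apply tangent_scale; auto).
      assert (Hn' : knorm s' = d / 2).
      { unfold s'. rewrite knorm_scale, Rabs_right by lra. fold n. exact htn. }
      assert (Hl := proj1 (Hloc s' Hs' ltac:(rewrite Hn'; lra))). rewrite Hn' in Hl.
      assert (Eq2 : vadd p0 s' = vadd (vscale (1 - t) p0) (vscale t q)).
      { apply functional_extensionality; intro k.
        unfold s', s, Defs.vadd, Defs.vsub, Defs.vscale; ring. }
      rewrite Eq2 in Hl. unfold s' in Hl. rewrite kdot_scale_r in Hl.
      pose proof (Hconv p0 q t ltac:(lra)) as Hcv.
      set (hq := f q - f p0 - kdot g0 s).
      assert (Hth : lam / 4 * (d / 2) ^ 2 <= t * hq) by (unfold hq; nra).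
      assert (Hhq : lam * d * n / 8 <= hq).
      { assert (Hm : lam / 4 * (d / 2) ^ 2 * n <= t * n * hq) by nra.
        rewrite htn in Hm. apply (Rmult_le_reg_r (d / 2)); [lra|]. nra. }
      assert (hn2' : n <= 2) by nra.
      apply Rle_trans with (lam * d / 16 * n ^ 2); [nra|].
      apply Rle_trans with (lam * d * n / 8); [|exact Hhq].
      assert (0 <= lam * d) by nra.
      assert (Hx : 0 <= (lam * d) * n * (2 - n)) by (apply Rmult_le_pos; [apply Rmult_le_pos|]; lra).
      replace (lam * d * n / 8) with (lam * d / 16 * n ^ 2 + (lam * d) * n * (2 - n) / 16) by field.
      lra.
    + eapply Rle_trans; [exact Hup|].
      apply Rle_trans with (B / (d * d) * n ^ 2).
      * replace B with (B / (d * d) * (d * d)) at 1 by (field; lra). apply Rmult_le_compat_l; auto.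
      * unfold C. assert (0 <= n ^ 2) by nra. nra.
Qed.
End Key.
Theorem theorem3p6 (K : Type) (enumK : list K)
  (HnodupK : NoDup enumK) (HfullK : forall k : K, In k enumK)
  (A : vec K -> Prop) (p0 : vec K)
  (HAne : knonempty K A) (HAcpt : kcompact K enumK A) (HAcvx : kconvex K A)
  (Hp0 : in_simplex K enumK p0) (Hp0full : full_support K p0)
  (HbdA : C2_hypersurface_boundary K enumK A)
  (Hflex : exists H : K -> K -> R,
      twice_diff_along K enumK (vA K enumK A) p0 H /\ pos_def_along K enumK H) :
  exists C c : R, 0 < C /\ 0 < c /\
    forall (Omega : Type) (P : ExpSpace Omega) (q : Omega -> vec K),
      (forall w, in_simplex K enumK (q w)) ->
      (forall k, Lint P (fun w => q w k)) ->
      (forall k, Ex P (fun w => q w k) = p0 k) ->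
      Lint P (fun w => vA K enumK A (q w)) ->
      Lint P (fun w => knorm K enumK (vsub K (q w) p0) ^ 2) ->
      C * Ex P (fun w => knorm K enumK (vsub K (q w) p0) ^ 2)
        >= Ex P (fun w => vA K enumK A (q w)) - vA K enumK A p0 /\
      Ex P (fun w => vA K enumK A (q w)) - vA K enumK A p0
        >= c * Ex P (fun w => knorm K enumK (vsub K (q w) p0) ^ 2).
Proof.
  assert (Hm : forall p, is_max_value K enumK A p (vA K enumK A p)).
  { intro p. apply vA_spec. apply (max_exists K enumK HfullK A HAne HAcpt p). }
  destruct HAcpt as [Hcl [M HM]].
  destruct Hflex as [H [Htd Hpd]].
  destruct (taylor K enumK _ _ _ Htd) as [g0 Htay].
  destruct (posdef_const K enumK HfullK H Hpd) as [lam [Hlam Hlamq]].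
  destruct (Htay (lam / 4)) as [d [Hd Hloc]]; [lra|].
  destruct (key K enumK HfullK (vA K enumK A) p0 g0 lam d (CH K enumK H) (Rabs M)
              Hlam Hd (CH_ge0 K enumK H) (Rabs_pos M) Hp0) as [C [c [HC [Hc Hqb]]]].
  { intros s Hs Hsn. specialize (Hloc s Hs Hsn). specialize (Hlamq s Hs).
    pose proof (quad_bound K enumK HfullK H s) as Hqd.
    pose proof (Rle_abs (kdot K enumK s (mxv K enumK H s))).
    assert (0 <= knorm K enumK s ^ 2) by (pose proof (knorm_ge0 K enumK s); nra).
    unfold Rabs in Hloc.
    destruct (Rcase_abs (vA K enumK A (vadd K p0 s) - vA K enumK A p0 - kdot K enumK g0 s -
                         / 2 * kdot K enumK s (mxv K enumK H s))); split; nra. }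
  { apply (vA_bound K enumK HfullK A M Hm HM). }
  { apply (vA_convex K enumK A Hm). }
  exists C, c. split; [exact HC|]. split; [exact Hc|].
  intros Omega P q Hqs Hqk Hqe HLf Hr2.
  set (f := vA K enumK A).
  set (lin := fun w => kdot K enumK g0 (vsub K (q w) p0)).
  assert (Hlin : Lint P lin /\ Ex P lin = 0).
  { destruct (Ex_lsum Omega P K enumK (fun w k => g0 k * (q w k - p0 k))) as [L1 L2].
    { intro k. apply (Lint_scale _ P (g0 k) (fun w => q w k - p0 k)).
      apply (Lint_add _ P (fun w => q w k) (fun _ => - p0 k)); auto. apply Lint_const. }
    split; [exact L1|]. change (Ex P (fun w => lsum K enumK (fun k => g0 k * (q w k - p0 k))) = 0).
    rewrite L2. rewrite <- (lsum_zero K enumK). apply lsum_ext. intro k.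
    rewrite (Ex_scale _ P (g0 k) (fun w => q w k - p0 k)).
    2:{ apply (Lint_add _ P (fun w => q w k) (fun _ => - p0 k)); auto. apply Lint_const. }
    change (g0 k * Ex P (fun w => q w k + - p0 k) = 0).
    rewrite Ex_add; auto; [|apply Lint_const]. rewrite Ex_const, Hqe. ring. }
  destruct Hlin as [HLlin HElin].
  set (hw := fun w => f (q w) + (-1) * (f p0 + lin w)).
  assert (HLh : Lint P hw).
  { apply Lint_add; auto. apply Lint_scale. apply Lint_add; auto. apply Lint_const. }
  assert (HEh : Ex P hw = Ex P (fun w => f (q w)) - f p0).
  { unfold hw. rewrite Ex_add; auto.
    2:{ apply Lint_scale. apply Lint_add; auto. apply Lint_const. }
    rewrite Ex_scale. 2:{ apply Lint_add; auto. apply Lint_const. }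
    rewrite Ex_add; auto; [|apply Lint_const]. rewrite Ex_const, HElin. ring. }
  assert (Hpt : forall w, c * knorm K enumK (vsub K (q w) p0) ^ 2 <= hw w <=
                          C * knorm K enumK (vsub K (q w) p0) ^ 2).
  { intro w. unfold hw, lin. replace (f (q w) + -1 * (f p0 + kdot K enumK g0 (vsub K (q w) p0)))
      with (f (q w) - f p0 - kdot K enumK g0 (vsub K (q w) p0)) by ring. apply Hqb; auto. }
  rewrite <- HEh. split.
  - rewrite <- (Ex_scale _ P C); auto. apply Rle_ge. apply Ex_mono; auto.
    + apply Lint_scale; auto.
    + intro w; apply Hpt.
  - rewrite <- (Ex_scale _ P c); auto. apply Rle_ge. apply Ex_mono; auto.
    + apply Lint_scale; auto.
    + intro w; apply Hpt.
Qed.
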